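(* Let $(\Lambda,d)$ be a $k$-graph and let $\sim$ be an equivalence relation on (the set of morphisms of) $\Lambda$ with the following properties: (1) if $\mu \sim \nu$ then $d(\mu) = d(\nu)$; (2) if $\alpha \sim \alpha'$ and $\beta \sim \beta'$ with $r(\beta) = s(\alpha)$ and $r(\beta') = s(\alpha')$, then $\alpha\beta \sim \alpha'\beta'$; (3) if $\alpha\beta \sim \alpha'\beta'$ (both composable pairs) and $d(\alpha) = d(\alpha')$, then $\alpha \sim \alpha'$ and $\beta \sim \beta'$; (4) if $s(\alpha) \sim r(\beta)$, then there exist $\alpha', \beta'$ such that $\alpha' \sim \alpha$, $\beta'\sim\beta$ and $s(\alpha') = r(\beta')$. Then the formulas $d([\mu]) = d(\mu)$, $r([\mu]) = [r(\mu)]$, $s([\mu]) = [s(\mu)]$, and $[\lambda][\mu] = [\alpha\beta]$ (for any $\alpha\in[\lambda]$, $\beta\in[\mu]$ with $s(\alpha)=r(\beta)$, whenever $[s(\lambda)]=[r(\mu)]$) are well defined, and with these structure maps the quotient $\Lambda/{\sim}$ is a $k$-graph.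
   Context: For $k\ge 0$, $\mathbb{N}^k$ is the additive monoid with generators $e_1,\dots,e_k$ ($\mathbb{N}^0=\{0\}$). A $k$-graph is a countable small category $\Lambda$ together with a functor $d:\Lambda\to\mathbb{N}^k$ (the degree map) satisfying the factorisation property: writing $\Lambda^n=d^{-1}(n)$, for all $m,n\in\mathbb{N}^k$ the composition map $(\mu,\nu)\mapsto\mu\nu$ is a bijection from $\{(\mu,\nu)\in\Lambda^m\times\Lambda^n : s(\mu)=r(\nu)\}$ onto $\Lambda^{m+n}$. Objects are identified with their identity morphisms, so $\Lambda^0$ is the set of vertices, and $r,s:\Lambda\to\Lambda^0$ are the range (codomain) and source (domain) maps. $k$-graphs are assumed nonempty. $[\lambda]$ denotes the $\sim$-equivalence class of $\lambda$. *)

(* Defs.v *)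
From mathcomp Require Import all_boot.
Set Implicit Arguments. Unset Strict Implicit. Unset Printing Implicit Defensive.

Definition Nk (k : nat) := {ffun 'I_k -> nat}.
Definition Nk_add (k : nat) (m n : Nk k) : Nk k := [ffun i => m i + n i].
Definition Nk_zero (k : nat) : Nk k := [ffun _ => 0].

(* A k-graph, presented "arrows only": M is the set of morphisms, objects are
   identified with identity morphisms (the v with r v = v), r/s are range and
   source (as morphisms), comp f g = f g is composition (meaningful when
   s f = r g), and d is the degree functor. *)
Definition is_kgraph (k : nat) (M : Type) (r s : M -> M) (comp : M -> M -> M)
    (d : M -> Nk k) : Prop :=
  (exists f : M -> nat, injective f) /\ inhabited M /\
  (forall f, r (r f) = r f /\ s (r f) = r f /\ r (s f) = s f /\ s (s f) = s f) /\
  (forall f g, s f = r g -> r (comp f g) = r f /\ s (comp f g) = s g) /\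
  (forall f, comp (r f) f = f /\ comp f (s f) = f) /\
  (forall f g h, s f = r g -> s g = r h -> comp (comp f g) h = comp f (comp g h)) /\
  (forall f, d (r f) = Nk_zero k) /\
  (forall f g, s f = r g -> d (comp f g) = Nk_add (d f) (d g)) /\
  (forall (m n : Nk k) (l : M), d l = Nk_add m n ->
     exists mu nu, (d mu = m /\ d nu = n /\ s mu = r nu /\ comp mu nu = l) /\
       forall mu' nu', d mu' = m -> d nu' = n -> s mu' = r nu' -> comp mu' nu' = l ->
         mu' = mu /\ nu' = nu).

(* Main.v *)
Require Import Defs.
From mathcomp Require Import all_boot.
From Stdlib Require Import ClassicalEpsilon.

Theorem proposition2p1 (k : nat) (M : Type) (r s : M -> M) (comp : M -> M -> M)
    (d : M -> Nk k) (eqv : M -> M -> Prop) :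
  is_kgraph r s comp d ->
  (forall x, eqv x x) -> (forall x y, eqv x y -> eqv y x) ->
  (forall x y z, eqv x y -> eqv y z -> eqv x z) ->
  (* (1) *) (forall mu nu, eqv mu nu -> d mu = d nu) ->
  (* (2) *) (forall a a' b b', eqv a a' -> eqv b b' -> r b = s a -> r b' = s a' ->
               eqv (comp a b) (comp a' b')) ->
  (* (3) *) (forall a a' b b', s a = r b -> s a' = r b' -> eqv (comp a b) (comp a' b') ->
               d a = d a' -> eqv a a' /\ eqv b b') ->
  (* (4) *) (forall a b, eqv (s a) (r b) ->
               exists a' b', eqv a' a /\ eqv b' b /\ s a' = r b') ->
  (* for any realisation Q of the quotient Lambda/~ with class map q *)
  forall (Q : Type) (q : M -> Q),
    (forall y : Q, exists x, q x = y) ->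
    (forall x y, q x = q y <-> eqv x y) ->
    (* composable representatives exist whenever [s(l)] = [r(mu)] *)
    (forall l mu, q (s l) = q (r mu) ->
       exists a b, eqv a l /\ eqv b mu /\ s a = r b) /\
    exists (rQ sQ : Q -> Q) (compQ : Q -> Q -> Q) (dQ : Q -> Nk k),
      (forall mu, dQ (q mu) = d mu) /\
      (forall mu, rQ (q mu) = q (r mu)) /\
      (forall mu, sQ (q mu) = q (s mu)) /\
      (forall l mu a b, q (s l) = q (r mu) -> eqv a l -> eqv b mu -> s a = r b ->
         compQ (q l) (q mu) = q (comp a b)) /\
      is_kgraph rQ sQ compQ dQ.
Proof.
move=> KG refl sym trans H1 H2 H3 H4 Q q surj qE.
have KG' := KG.
case: KG' => [[fc fcinj] [[m0] [cat [rsc [idl [asc [dr [dc fact]]]]]]]].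
have first : forall l mu, q (s l) = q (r mu) ->
       exists a b, eqv a l /\ eqv b mu /\ s a = r b.
  move=> l mu /qE /H4 [a' [b' [? [? ?]]]]; by exists a', b'.
split => //.
have rs_eqv : forall x y, eqv x y -> eqv (r x) (r y) /\ eqv (s x) (s y).
  move=> x y exy.
  have [c1 [c2 [c3 c4]]] := cat x. have [c1' [c2' [c3' c4']]] := cat y.
  have [i1 i2] := idl x. have [i1' i2'] := idl y.
  split.
  - have := (H3 (r x) (r y) x y c2 c2').
    rewrite i1 i1' => /(_ exy); rewrite !dr => /(_ erefl) [] //.
  - have := (H3 x y (s x) (s y) (esym c3) (esym c3')).
    rewrite i2 i2' => /(_ exy (H1 _ _ exy)) [] //.
pose rep := fun y => proj1_sig (constructive_indefinite_description _ (surj y)).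
have repP : forall y, q (rep y) = y.
  by move=> y; rewrite /rep; case: constructive_indefinite_description.
have repq : forall x, eqv (rep (q x)) x by move=> x; apply/qE; rewrite repP.
pose rQ := fun y => q (r (rep y)).
pose sQ := fun y => q (s (rep y)).
pose dQ := fun y => d (rep y).
pose P := fun y z (p : M * M) => eqv p.1 (rep y) /\ eqv p.2 (rep z) /\ s p.1 = r p.2.
pose compQ := fun y z => let p := epsilon (inhabits (m0, m0)) (P y z) in q (comp p.1 p.2).
have rQq : forall x, rQ (q x) = q (r x).
  by move=> x; apply/qE; case: (rs_eqv _ _ (repq x)).
have sQq : forall x, sQ (q x) = q (s x).
  by move=> x; apply/qE; case: (rs_eqv _ _ (repq x)).
have dQq : forall x, dQ (q x) = d x by move=> x; apply: H1; apply: repq.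
have cspec : forall l mu a b, eqv a l -> eqv b mu -> s a = r b ->
         compQ (q l) (q mu) = q (comp a b).
  move=> l mu a b al bmu sab.
  rewrite /compQ.
  have ex : exists p, P (q l) (q mu) p.
    exists (a, b); split; first exact: trans al (sym _ _ (repq l)).
    split => //; exact: trans bmu (sym _ _ (repq mu)).
  have := epsilon_spec (inhabits (m0, m0)) _ ex.
  case: (epsilon _ _) => a0 b0 [e1 [e2 e3]]; simpl in e1, e2, e3.
  apply/qE; apply: H2 => //.
  - exact: trans e1 (trans _ _ _ (repq l) (sym _ _ al)).
  - exact: trans e2 (trans _ _ _ (repq mu) (sym _ _ bmu)).
have cq : forall a b, s a = r b -> compQ (q a) (q b) = q (comp a b).
  by move=> a b sab; apply: cspec.
have comp_lift : forall y z, sQ y = rQ z ->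
    exists a b, y = q a /\ z = q b /\ s a = r b.
  move=> y z; case: (surj y) => f <-; case: (surj z) => g <-.
  rewrite sQq rQq => /first [a [b [af [bg sab]]]].
  exists a, b; split; first by apply/qE/sym.
  by split => //; apply/qE/sym.
clearbody rQ sQ dQ compQ.
exists rQ, sQ, compQ, dQ.
split => //. split => //. split => //.
split; first by move=> l mu a b _; apply: cspec.
split.
  exists (fun y => fc (rep y)) => y1 y2 /fcinj e.
  by rewrite -(repP y1) -(repP y2) e.
split; first exact: inhabits (q m0).
split.
  move=> y; case: (surj y) => f <-.
  rewrite !(rQq, sQq). have [-> [-> [-> ->]]] := cat f. done.
split.
  move=> y z /comp_lift [a [b [-> [-> sab]]]].
  rewrite cq // rQq sQq. by have [-> ->] := rsc a b sab.
split.
  move=> y; case: (surj y) => f <-.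
  have [c1 [c2 [c3 c4]]] := cat f.
  rewrite rQq sQq !cq ?c2 ?c3 //.
  by have [-> ->] := idl f.
split.
  move=> y z w /comp_lift [a [b [-> [-> sab]]]].
  case: (surj w) => c <-.
  rewrite sQq rQq => /qE sbc.
  have [_ sab'] := rsc a b sab.
  have /H4 [x [c' [xab [cc sxc]]]] : eqv (s (comp a b)) (r c) by rewrite sab'.
  have [a2 [b2 [[da2 [db2 [s2 e2]]] _]]] := fact (d a) (d b) x
    (etrans (H1 _ _ xab) (dc a b sab)).
  have /H3 : eqv (comp a2 b2) (comp a b) by rewrite e2.
  move=> /(_ s2 sab da2) [aa bb].
  have -> : q a = q a2 by apply/qE/sym.
  have -> : q b = q b2 by apply/qE/sym.
  have -> : q c = q c' by apply/qE/sym.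
  have sbc' : s b2 = r c' by rewrite -sxc -e2; have [_ ->] := rsc a2 b2 s2.
  rewrite !cq //.
  - by rewrite asc.
  - by have [-> _] := rsc b2 c' sbc'.
  - by have [_ ->] := rsc a2 b2 s2.
split.
  by move=> y; case: (surj y) => f <-; rewrite rQq dQq dr.
split.
  move=> y z /comp_lift [a [b [-> [-> sab]]]].
  by rewrite cq // !dQq dc.
move=> m n y; case: (surj y) => l <-; rewrite dQq => /fact [mu [nu [[dm [dn [smn e]]] _]]].
exists (q mu), (q nu); split.
  by rewrite !dQq sQq rQq cq // e smn.
move=> mu' nu' dm' dn' /comp_lift [a [b [E1 [E2 sab]]]]; subst mu' nu'.
rewrite dQq in dm'. rewrite dQq in dn'.
rewrite cq // => /qE ab.
have /H3 : eqv (comp a b) (comp mu nu) by rewrite e.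
have dd : d a = d mu by rewrite dm dm'.
move=> /(_ sab smn dd) [].
by move=> /qE -> /qE ->.
Qed.
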